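(* Let $A,K$ be real $n\times n$ matrices, $\alpha>0$, and $F_{A,K,\alpha}(u)=|Ku|^\alpha Au$ for $u\in\mathbb R^n$. (i) If $K$ is invertible and $F_{A,K,\alpha}$ is monotone, then $u^TAu\ge0$ for all $u\in\mathbb R^n$. (ii) If $F_{A,K,\alpha}$ is $\beta$-monotone for some $\beta>0$, then $A$ and $K$ are invertible, $\beta=\alpha+2$, and there is $C>0$ with $u^TAu\ge C|u|^2$ for all $u\in\mathbb R^n$.
   Context: $|\cdot|$ is the Euclidean norm. A map $F:\mathbb R^n\to\mathbb R^n$ is monotone if $(F(u)-F(v))\cdot(u-v)\ge0$ for all $u,v$; for $\beta>0$ it is $\beta$-monotone if there is $C>0$ with $(F(u)-F(v))\cdot(u-v)\ge C|u-v|^\beta$ for all $u,v$. *)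

(* Defs.v *)
From HB Require Import structures.
From mathcomp Require Import all_boot all_order all_algebra.
From mathcomp Require Import all_classical all_reals all_analysis.
Set Implicit Arguments. Unset Strict Implicit. Unset Printing Implicit Defensive.
Import Order.TTheory GRing.Theory Num.Theory.
Local Open Scope ring_scope.

Definition dotv (R : realType) (n : nat) (u v : 'cV[R]_n) : R :=
  \sum_(i < n) u i 0 * v i 0.

Definition enorm (R : realType) (n : nat) (u : 'cV[R]_n) : R :=
  Num.sqrt (dotv u u).

Definition FAK (R : realType) (n : nat) (A K : 'M[R]_n) (alpha : R)
  (u : 'cV[R]_n) : 'cV[R]_n :=
  (enorm (K *m u) `^ alpha) *: (A *m u).

Definition monotone_map (R : realType) (n : nat) (F : 'cV[R]_n -> 'cV[R]_n) : Prop :=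
  forall u v : 'cV[R]_n, 0 <= dotv (F u - F v) (u - v).

Definition beta_monotone (R : realType) (n : nat) (beta : R)
  (F : 'cV[R]_n -> 'cV[R]_n) : Prop :=
  exists C : R, 0 < C /\
    forall u v : 'cV[R]_n, C * (enorm (u - v) `^ beta) <= dotv (F u - F v) (u - v).

(* Main.v *)
Require Import Defs.
From mathcomp Require Import all_boot all_order all_algebra.
From mathcomp Require Import all_classical all_reals all_analysis.
From mathcomp Require Import ring lra.
Import Order.TTheory GRing.Theory Num.Theory.
Local Open Scope ring_scope.

Section H.
Variable R : realType.
Variable n : nat.
Implicit Types u v : 'cV[R]_n.

Lemma dotv_ge0 u : 0 <= dotv u u.
Proof. by apply: sumr_ge0 => i _; rewrite -expr2 sqr_ge0. Qed.

Lemma dotv_eq0 u : dotv u u = 0 -> u = 0.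
Proof.
move=> /eqP; rewrite /dotv psumr_eq0 => [/allP H|i _]; last by rewrite -expr2 sqr_ge0.
apply/matrixP => i j; rewrite (ord1 j) mxE.
have /H /implyP /(_ isT) : i \in index_enum 'I_n by rewrite mem_index_enum.
by rewrite mulf_eq0 orbb => /eqP.
Qed.

Lemma enorm_gt0 u : u != 0 -> 0 < enorm u.
Proof.
move=> u0; rewrite /enorm sqrtr_gt0 lt_def dotv_ge0 andbT.
by apply: contra u0 => /eqP /dotv_eq0 ->.
Qed.

Lemma enorm_ge0 u : 0 <= enorm u.
Proof. exact: sqrtr_ge0. Qed.

Lemma enorm0 : enorm (0 : 'cV[R]_n) = 0.
Proof. by rewrite /enorm /dotv big1 ?sqrtr0 // => i _; rewrite mxE mul0r. Qed.

Lemma dotvZl c u v : dotv (c *: u) v = c * dotv u v.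
Proof. by rewrite /dotv mulr_sumr; apply: eq_bigr => i _; rewrite mxE mulrA. Qed.

Lemma dotvZr c u v : dotv u (c *: v) = c * dotv u v.
Proof. by rewrite /dotv mulr_sumr; apply: eq_bigr => i _; rewrite mxE mulrCA. Qed.

Lemma enormZ t u : 0 <= t -> enorm (t *: u) = t * enorm u.
Proof.
move=> t0; rewrite /enorm dotvZl dotvZr mulrA sqrtrM ?mulr_ge0 //.
by rewrite -expr2 sqrtr_sqr ger0_norm.
Qed.

Lemma qformE (A : 'M[R]_n) u : (u^T *m A *m u) 0 0 = dotv (A *m u) u.
Proof.
rewrite -mulmxA !mxE /dotv; apply: eq_bigr => i _; by rewrite mxE mulrC.
Qed.

Lemma ker_nonunit (K : 'M[R]_n) : ~~ (K \in unitmx) -> exists2 u : 'cV[R]_n, u != 0 & K *m u = 0.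
Proof.
rewrite unitmxE unitfE negbK -det_tr => /det0P [v v0 vK].
exists v^T; first by apply: contra v0 => /eqP h; rewrite -(trmxK v) h trmx0.
by rewrite -[K]trmxK -trmx_mul vK trmx0.
Qed.

Lemma coord_le u i : `|u i 0| <= enorm u.
Proof.
rewrite -sqrtr_sqr /enorm ler_sqrt ?dotv_ge0 // /dotv (bigD1 i) //= expr2 lerDl.
by apply: sumr_ge0 => j _; rewrite -expr2 sqr_ge0.
Qed.

Lemma opbound (K : 'M[R]_n) : (0 < n)%N -> exists2 L, 0 < L & forall u, enorm (K *m u) <= L * enorm u.
Proof.
move=> n0; set M := \sum_i \sum_j `|K i j|.
have M0 : 0 <= M by apply: sumr_ge0 => i _; apply: sumr_ge0.
have n1 : 1 <= n%:R :> R by rewrite ler1n.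
exists (n%:R * M + 1); first by nra.
move=> u; set e := enorm u.
have e0 : 0 <= e by apply: enorm_ge0.
have Hi : forall i, `|(K *m u) i 0| <= M * e.
  move=> i; rewrite mxE (le_trans (ler_norm_sum _ _ _)) //.
  apply: (@le_trans _ _ ((\sum_j `|K i j|) * e)).
    rewrite mulr_suml; apply: ler_sum => j _; rewrite normrM ler_wpM2l //.
    exact: coord_le.
  rewrite ler_wpM2r // /M [X in _ <= X](bigD1 i) //= lerDl.
  by apply: sumr_ge0 => k _; apply: sumr_ge0.
have Hd : dotv (K *m u) (K *m u) <= n%:R * (M * e) ^+ 2.
  apply: (@le_trans _ _ (\sum_(i < n) (M * e) ^+ 2)); last first.
    by rewrite sumr_const card_ord mulr_natl.
  apply: ler_sum => i _; rewrite -expr2 -real_normK ?num_real //.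
  by rewrite lerXn2r ?nnegrE ?mulr_ge0 // Hi.
rewrite /enorm -[X in _ <= X]ger0_norm ?mulr_ge0 //; last by nra.
rewrite -sqrtr_sqr ler_sqrt; last exact: sqr_ge0.
apply: (le_trans Hd).
have x0 : 0 <= M * e by rewrite mulr_ge0.
have h1 : n%:R * (M * e) ^+ 2 <= (n%:R * (M * e)) ^+ 2.
  have y0 := sqr_ge0 (M * e); rewrite exprMn; set y := (M * e) ^+ 2 in y0 *; nra.
apply: (le_trans h1); rewrite lerXn2r ?nnegrE ?mulr_ge0 //; try nra.

Qed.
End H.

Lemma beta_eq (R : realType) (C a b beta gam : R) : 0 < C -> 0 < a -> 0 < b ->
  (forall t, 0 < t -> C * (t `^ beta * a) <= t `^ gam * b) -> beta = gam.
Proof.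
move=> C0 a0 b0 H; apply/eqP; apply/negPn/negP => hne.
have d0 : gam - beta != 0 by rewrite subr_eq0 eq_sym.
set x := C * a / (2 * b).
have x0 : 0 < x by rewrite /x divr_gt0 ?mulr_gt0.
set t := x `^ (gam - beta)^-1.
have t0 : 0 < t by apply: powR_gt0.
have ht : t `^ (gam - beta) = x by rewrite /t -powRrM mulVf // powRr1 // ltW.
have hg : t `^ gam = t `^ beta * x.
  by rewrite -ht -powRD ?(gt_eqF t0) ?implybT // addrCA subrr addr0.
have := H t t0; rewrite hg.
have p0 : 0 < t `^ beta by apply: powR_gt0.
have hx : x * b = C * a / 2 by rewrite /x; field; rewrite ?gt_eqF.
move: p0 hx; set p := t `^ beta => p0 hx.
have : 0 < C * a * p by rewrite !mulr_gt0.
nra.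
Qed.

Lemma keyE (R : realType) (n : nat) (A K : 'M[R]_n) (alpha : R) (u : 'cV[R]_n) :
  dotv (FAK A K alpha u - FAK A K alpha 0) (u - 0) =
  enorm (K *m u) `^ alpha * (u^T *m A *m u) 0 0.
Proof. by rewrite /FAK !mulmx0 scaler0 !subr0 dotvZl qformE. Qed.

Theorem mainTheorem9 (R : realType) (n : nat) (A K : 'M[R]_n) (alpha : R) :
  (0 < n)%N -> 0 < alpha ->
  ((K \in unitmx) -> monotone_map (FAK A K alpha) ->
     forall u : 'cV[R]_n, 0 <= (u^T *m A *m u) 0 0)
  /\
  (forall beta : R, 0 < beta -> beta_monotone beta (FAK A K alpha) ->
     [/\ A \in unitmx, K \in unitmx, beta = alpha + 2 &
        exists C : R, 0 < C /\
          forall u : 'cV[R]_n, C * enorm u ^+ 2 <= (u^T *m A *m u) 0 0]).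
Proof.
move=> n0 a0.
have q0 (u : 'cV[R]_n) : u = 0 -> (u^T *m A *m u) 0 0 = 0.
  by move=> ->; rewrite qformE /dotv big1 // => i _; rewrite !mxE mulr0.
have Kne (Ku : K \in unitmx) (w : 'cV[R]_n) : w != 0 -> 0 < enorm (K *m w).
  move=> w0; apply: enorm_gt0; apply: contra w0 => /eqP h.
  by rewrite -(mulKmx Ku w) h mulmx0.
split.
  move=> Ku Hm u; have := Hm u 0; rewrite keyE.
  have [->|u0] := eqVneq u 0; first by rewrite q0.
  by rewrite pmulr_rge0 // powR_gt0 // Kne.
move=> beta b0 [C [C0 H]].
have H0 (u : 'cV[R]_n) : C * enorm u `^ beta <= enorm (K *m u) `^ alpha * (u^T *m A *m u) 0 0.
  by have := H u 0; rewrite keyE subr0.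
have pos (u : 'cV[R]_n) : u != 0 -> 0 < C * enorm u `^ beta.
  by move=> u0; rewrite mulr_gt0 // powR_gt0 // enorm_gt0.
have KU : K \in unitmx.
  apply/negPn/negP => /ker_nonunit [u u0 Ku0].
  have := H0 u; rewrite Ku0 enorm0 powR0 ?gt_eqF // mul0r => h.
  by have := pos u u0; rewrite ltNge h.
have AU : A \in unitmx.
  apply/negPn/negP => /ker_nonunit [u u0 Au0].
  have := H0 u; rewrite -mulmxA Au0 mulmx0 mxE mulr0 => h.
  by have := pos u u0; rewrite ltNge h.
have Hb : beta = alpha + 2.
  set u1 := const_mx 1 : 'cV[R]_n.
  have u10 : u1 != 0.
    apply/eqP => /matrixP /(_ (Ordinal n0) 0); rewrite !mxE => /eqP.
    by rewrite oner_eq0.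
  have bp := lt_le_trans (pos u1 u10) (H0 u1).
  have ap : 0 < enorm u1 `^ beta by rewrite powR_gt0 // enorm_gt0.
  apply: (@beta_eq _ C _ _ _ _ C0 ap bp) => t t0.
  have := H0 (t *: u1).
  have t0w := ltW t0.
  rewrite qformE -!scalemxAr !enormZ // !powRM ?enorm_ge0 // dotvZl dotvZr -qformE.
  rewrite powRD; last by rewrite (gt_eqF t0) implybT.
  rewrite (powR_mulrn 2 t0w) => h.
  by apply: (le_trans h); rewrite le_eqVlt; apply/orP; left; apply/eqP; ring.
split => //.
have [L L0 HL] := @opbound R n K n0.
have La0 : 0 < L `^ alpha by apply: powR_gt0.
exists (C / L `^ alpha); split; first by rewrite divr_gt0.
move=> u; have [->|u0] := eqVneq u 0; first by rewrite q0 // enorm0 expr0n /= mulr0.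
have e0 := @enorm_gt0 R n u u0; have eK0 := Kne KU u u0.
have := H0 u; rewrite Hb powRD; last by rewrite (gt_eqF e0) implybT.
rewrite (powR_mulrn 2 (ltW e0)).
have hQ : enorm (K *m u) `^ alpha <= L `^ alpha * enorm u `^ alpha.
  rewrite -powRM ?(ltW L0) ?(ltW e0) //; apply: (ge0_ler_powR (ltW a0)); rewrite ?nnegrE ?enorm_ge0 ?mulr_ge0 ?(ltW L0) ?(ltW e0) //.
have P0 : 0 < enorm u `^ alpha by apply: powR_gt0.
have Q0 : 0 < enorm (K *m u) `^ alpha by apply: powR_gt0.
move: hQ P0 Q0.
set P := enorm u `^ alpha; set Q := enorm (K *m u) `^ alpha; set La := L `^ alpha.
set q := (u^T *m A *m u) 0 0; set s := enorm u ^+ 2 => hQ P0 Q0 h.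
have s0 : 0 < s by rewrite exprn_gt0.
have qp : 0 < q.
  have : 0 < Q * q by apply: lt_le_trans h; rewrite !mulr_gt0.
  by rewrite pmulr_rgt0.
have h2 : Q * q <= La * P * q by rewrite ler_wpM2r // ltW.
rewrite mulrAC ler_pdivrMr //.
nra.
Qed.
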